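(* Let $G$ be a maximal $3$-$\gamma_{c}$-vertex critical graph, let $I$ be a maximum independent set of $G$, and let $W$ be a vertex set inducing a maximum complete subgraph of $G$ such that $|I\cap W|$ is minimum. For every $w\in W$ and every minimum connected dominating set $D_{w}$ of $G-w$, we have $|D_{w}\cap W|=0$ and $|D_{w}\cap I|\leq 1$.
   Context: All graphs are finite, simple and connected. A set $D\subseteq V(G)$ is a connected dominating set of $G$ if every vertex of $G$ is in $D$ or adjacent to a vertex of $D$, and $G[D]$ is connected; $\gamma_{c}(G)$ is the minimum cardinality of such a set. $G$ is $k$-$\gamma_{c}$-edge critical if $\gamma_{c}(G)=k$ and $\gamma_{c}(G+uv)<k$ for every pair of non-adjacent vertices $u,v$. A $2$-connected graph $G$ is $k$-$\gamma_{c}$-vertex critical if $\gamma_{c}(G)=k$ and $\gamma_{c}(G-v)<k$ for every $v\in V(G)$. $G$ is maximal $k$-$\gamma_{c}$-vertex critical if it is both $k$-$\gamma_{c}$-edge critical and $k$-$\gamma_{c}$-vertex critical. *)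

(* Defs.v *)
(* A graph on vertex type T : finType is a relation e : rel T
   (simple graph: symmetric and irreflexive). Subgraphs obtained by deleting
   vertices are represented by a vertex set V : {set T} with induced edges. *)
From mathcomp Require Import all_boot.
Set Implicit Arguments. Unset Strict Implicit. Unset Printing Implicit Defensive.

Section Graphs.
Variable T : finType.

Definition simple_graph (e : rel T) : Prop := symmetric e /\ irreflexive e.

Definition induced (e : rel T) (S : {set T}) : rel T :=
  [rel x y | [&& x \in S, y \in S & e x y]].

Definition connected_in (e : rel T) (S : {set T}) : bool :=
  [forall x in S, forall y in S, connect (induced e S) x y].

Definition cds (e : rel T) (V D : {set T}) : bool :=
  [&& D \subset V,
      [forall x in V, (x \in D) || [exists y in D, e x y]]
    & connected_in e D].

(* connected domination number gamma_c(G[V]) (= #|T|.+1 if no CDS exists) *)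
Definition gamma_c (e : rel T) (V : {set T}) : nat :=
  \big[minn/#|T|.+1]_(D : {set T} | cds e V D) #|D|.

Definition add_edge (e : rel T) (u v : T) : rel T :=
  [rel x y | [|| e x y, (x == u) && (y == v) | (x == v) && (y == u)]].

Definition del_vertex (v : T) : {set T} := [set: T] :\ v.

Definition connected_graph (e : rel T) : Prop := connected_in e [set: T].

Definition two_connected (e : rel T) : Prop :=
  2 < #|T| /\ connected_graph e /\ forall v : T, connected_in e (del_vertex v).

Definition edge_critical (k : nat) (e : rel T) : Prop :=
  gamma_c e [set: T] = k /\
  forall u v : T, u != v -> ~~ e u v -> gamma_c (add_edge e u v) [set: T] < k.

Definition vertex_critical (k : nat) (e : rel T) : Prop :=
  two_connected e /\ gamma_c e [set: T] = k /\
  forall v : T, gamma_c e (del_vertex v) < k.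

Definition maximal_vertex_critical (k : nat) (e : rel T) : Prop :=
  edge_critical k e /\ vertex_critical k e.

Definition independent (e : rel T) (I : {set T}) : bool :=
  [forall x in I, forall y in I, ~~ e x y].

Definition max_independent (e : rel T) (I : {set T}) : Prop :=
  independent e I /\ forall J : {set T}, independent e J -> #|J| <= #|I|.

Definition clique (e : rel T) (W : {set T}) : bool :=
  [forall x in W, forall y in W, (x != y) ==> e x y].

Definition max_clique (e : rel T) (W : {set T}) : Prop :=
  clique e W /\ forall W' : {set T}, clique e W' -> #|W'| <= #|W|.

End Graphs.

(* Main.v *)
Require Import Defs.
From mathcomp Require Import all_boot.

Lemma bigmin_leq_seq (I : eqType) (r : seq I) (P : pred I) (F : I -> nat) x0 j :
  j \in r -> P j -> \big[minn/x0]_(i <- r | P i) F i <= F j.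
Proof.
elim: r => //= a r IH; rewrite inE big_cons => /orP[/eqP<- Pj|jr Pj].
  by rewrite Pj geq_minl.
case: (P a); last exact: IH.
by apply: leq_trans (geq_minr _ _) (IH jr Pj).
Qed.

Lemma gamma_c_le (T : finType) (e : rel T) V D : cds e V D -> gamma_c e V <= #|D|.
Proof.
move=> H; rewrite /gamma_c; apply: bigmin_leq_seq => //; exact: mem_index_enum.
Qed.

Theorem lemma3p4 (T : finType) (e : rel T) (I W : {set T}) :
  simple_graph e -> connected_graph e ->
  maximal_vertex_critical 3 e ->
  max_independent e I ->
  max_clique e W ->
  (forall W' : {set T}, max_clique e W' -> #|I :&: W| <= #|I :&: W'|) ->
  forall (w : T) (Dw : {set T}), w \in W ->
    cds e (del_vertex w) Dw -> #|Dw| = gamma_c e (del_vertex w) ->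
    #|Dw :&: W| = 0 /\ #|Dw :&: I| <= 1.
Proof.
move=> [sym irr] _ [[g3 _] [_ [_ vc]]] [indI _] [clW _] _ w Dw wW cdsD hD.
have le2 : #|Dw| <= 2 by rewrite hD -ltnS; exact: vc.
have /and3P[subD domD conD] := cdsD.
split.
  apply/eqP; rewrite cards_eq0; apply/eqP/setP => u; rewrite !inE.
  apply/negP => /andP[uD uW].
  have uw : u != w by move: (subsetP subD u uD); rewrite !inE => /andP[].
  have euw : e w u.
    by rewrite sym; move/forallP: clW => /(_ u); rewrite uW => /forallP/(_ w); rewrite wW /= uw.
  have : cds e [set: T] Dw.
    apply/and3P; split; [exact: subsetT| |exact: conD].
    apply/forallP => x; apply/implyP => _.
    case: (eqVneq x w) => [->|xw].
      by apply/orP; right; apply/existsP; exists u; rewrite uD.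
    by move/forallP: domD => /(_ x); rewrite !inE xw.
  move/gamma_c_le; rewrite g3 => H.
  by have := leq_trans H le2.
rewrite leqNgt; apply/negP => /card_gt1P[a [b [aDI bDI ab]]].
move: aDI bDI; rewrite !inE => /andP[aD aI] /andP[bD bI].
have nab : ~~ e a b.
  by move/forallP: indI => /(_ a); rewrite aI => /forallP/(_ b); rewrite bI.
have nba : ~~ e b a by rewrite sym.
have Dab : Dw = [set a; b].
  apply/eqP; rewrite eq_sym eqEcard; apply/andP; split.
    by apply/subsetP => x; rewrite !inE => /orP[]/eqP->.
  by rewrite cards2 ab; exact: le2.
have cab : connect (induced e Dw) a b.
  by move/forallP: conD => /(_ a); rewrite aD => /forallP/(_ b); rewrite bD.
have cl : closed (induced e Dw) (pred1 a).
  move=> x y /=; rewrite Dab !inE => /and3P[hx hy exy].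
  case/set2P: hx => hx; case/set2P: hy => hy; subst x y; rewrite ?eqxx //.
  - by rewrite exy in nab.
  - by rewrite exy in nba.
have := closed_connect cl cab; rewrite !inE eqxx => /esym/eqP ba.
by rewrite ba in ab; move/negP: ab.
Qed.
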